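(* Let $K$ be a skew field, let $V$ be a left (topological) vector space over $K$ with basis $v^0,v^1,\ldots$, and let $V'$ be the dual right (topological) vector space with basis $p_0,p_1,\ldots$, with pairing $(\cdot,\cdot):V\times V'\to K$. Put $y_i^k=(v^k,p_i)$ and let $D$ be the infinite matrix whose entry in row $k$ and column $i$ is $y_i^k$ ($i,k\ge 0$). For a generic matrix $D$ there exist a unique infinite upper triangular matrix $A=(a_m^i)_{i,m\ge0}$ (i.e. $a_m^i=0$ for $i>m$) and a unique infinite lower triangular matrix $C=(c_k^m)_{m,k\ge0}$ (i.e. $c_k^m=0$ for $k>m$) such that the vectors $$w^m=\sum_{k=0}^m c_k^m v^k\in V,\qquad q_m=\sum_{i=0}^m p_i a_m^i\in V'$$ form biorthogonal bases of $V$ and $V'$, i.e. satisfy $(w^m,q_{m'})=0$ for $m\ne m'$ and $(w^m,p_m)=(v^m,q_m)=1$ for all $m\ge0$.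
   Context: The pairing satisfies $(\lambda v,p\mu)=\lambda(v,p)\mu$ for $\lambda,\mu\in K$, and is additive in each argument. ''Generic'' means that $D$ avoids the degenerate cases in which the relevant finite square submatrices of $D$ (here the leading principal submatrices $(y_i^k)_{0\le i,k\le m}$, $m\ge0$) fail to be invertible. *)

(* Defs.v *)
From HB Require Import structures.
From mathcomp Require Import all_boot all_order all_algebra.
Set Implicit Arguments. Unset Strict Implicit. Unset Printing Implicit Defensive.
Import Order.TTheory GRing.Theory.
Local Open Scope ring_scope.

Definition skew_field (K : unitRingType) : Prop :=
  forall x : K, x != 0 -> x \is a GRing.unit.

(* A pairing between a left K-vector space V and a right K-vector space V'
   (a right K-space is a left module over the converse ring K^c, with
   p * mu written (mu : K^c) *: p). *)
Definition is_pairing (K : unitRingType) (V : lmodType K) (V' : lmodType K^c)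
  (pair : V -> V' -> K) : Prop :=
  [/\ forall v1 v2 p, pair (v1 + v2) p = pair v1 p + pair v2 p,
      forall v p1 p2, pair v (p1 + p2) = pair v p1 + pair v p2,
      forall (l : K) v p, pair (l *: v) p = l * pair v p
    & forall v (m : K) p, pair v ((m : K^c) *: p) = pair v p * m].

Definition Dmat (K : unitRingType) (V : lmodType K) (V' : lmodType K^c)
  (pair : V -> V' -> K) (v : nat -> V) (p : nat -> V') : nat -> nat -> K :=
  fun k i => pair (v k) (p i).

Definition lead_submx (K : unitRingType) (D : nat -> nat -> K) (m : nat)
  : 'M[K]_(m.+1) := \matrix_(k < m.+1, i < m.+1) D k i.

(* Invertibility of a square matrix over a (possibly noncommutative) ring:
   existence of a two-sided inverse. *)
Definition invertible_mx (K : unitRingType) (n : nat) (M : 'M[K]_n) : Prop :=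
  exists N : 'M[K]_n, M *m N = 1%:M /\ N *m M = 1%:M.

Definition generic_mx (K : unitRingType) (D : nat -> nat -> K) : Prop :=
  forall m : nat, invertible_mx (lead_submx D m).

(* A : nat -> nat -> K with A i m = a_m^i (upper triangular: a_m^i = 0 for i > m);
   C : nat -> nat -> K with C m k = c_k^m (lower triangular: c_k^m = 0 for k > m). *)
Definition upper_tri (K : unitRingType) (A : nat -> nat -> K) : Prop :=
  forall i m : nat, (m < i)%N -> A i m = 0.
Definition lower_tri (K : unitRingType) (C : nat -> nat -> K) : Prop :=
  forall m k : nat, (m < k)%N -> C m k = 0.

Definition wvec (K : unitRingType) (V : lmodType K) (v : nat -> V)
  (C : nat -> nat -> K) (m : nat) : V :=
  \sum_(k < m.+1) C m k *: v k.

Definition qvec (K : unitRingType) (V' : lmodType K^c) (p : nat -> V')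
  (A : nat -> nat -> K) (m : nat) : V' :=
  \sum_(i < m.+1) (A i m : K^c) *: p i.

Definition biorthogonal (K : unitRingType) (V : lmodType K) (V' : lmodType K^c)
  (pair : V -> V' -> K) (v : nat -> V) (p : nat -> V')
  (A C : nat -> nat -> K) : Prop :=
  [/\ forall m m' : nat, m <> m' -> pair (wvec v C m) (qvec p A m') = 0,
      forall m : nat, pair (wvec v C m) (p m) = 1
    & forall m : nat, pair (v m) (qvec p A m) = 1].

(* Main.v *)
Require Import Defs.
From HB Require Import structures.
From mathcomp Require Import all_boot all_order all_algebra.
Local Open Scope ring_scope.
Import GRing.Theory.

Section Helpers.
Variables (K : unitRingType) (V : lmodType K) (V' : lmodType K^c)
  (pair : V -> V' -> K) (v : nat -> V) (p : nat -> V').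
Hypothesis Hp : is_pairing pair.

Lemma pair0l q : pair 0 q = 0.
Proof.
case: Hp => h1 _ _ _.
have := h1 0 0 q; rewrite addr0 => /(congr1 (fun x => x - pair 0 q)).
by rewrite subrr addrK.
Qed.

Lemma pair0r u : pair u 0 = 0.
Proof.
case: Hp => _ h2 _ _.
have := h2 u 0 0; rewrite addr0 => /(congr1 (fun x => x - pair u 0)).
by rewrite subrr addrK.
Qed.

Lemma pair_w C m q :
  pair (wvec v C m) q = \sum_(k < m.+1) C m k * pair (v k) q.
Proof.
case: Hp => h1 _ h3 _.
rewrite /wvec (big_morph (fun x => pair x q) (fun x y => h1 x y q) (pair0l q)).
by apply: eq_bigr => k _; rewrite h3.
Qed.

Lemma pair_q A m u :
  pair u (qvec p A m) = \sum_(i < m.+1) pair u (p i) * A i m.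
Proof.
case: Hp => _ h2 _ h4.
rewrite /qvec (big_morph (fun x => pair u x) (fun x y => h2 u x y) (pair0r u)).
by apply: eq_bigr => k _; rewrite h4.
Qed.

Hypothesis Hsk : skew_field K.
Hypothesis Hgen : generic_mx (Dmat pair v p).

Lemma core A' C' : biorthogonal pair v p A' C' -> forall n,
  (forall i, (i < n)%N -> pair (wvec v C' n) (p i) = 0) /\
  (forall k, (k < n)%N -> pair (v k) (qvec p A' n) = 0).
Proof.
case=> B1 B2 B3.
elim/ltn_ind => n IH.
have nzA : forall j, (j < n)%N -> A' j j != 0.
  move=> j ltjn; have [_ Hq] := IH j ltjn.
  apply/eqP => Ajj.
  have Az : forall i, (i < j)%N -> A' i j = 0.
    case: j ltjn Hq Ajj => [|j'] // ltjn Hq Ajj.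
    have [N [MN NM]] := Hgen j'.
    set M := lead_submx (Dmat pair v p) j'.
    set c := \col_(i < j'.+1) A' i j'.+1.
    have Mc : M *m c = 0.
      apply/matrixP => k z; rewrite !mxE.
      transitivity (pair (v k) (qvec p A' j'.+1)); last exact: Hq k (ltn_ord k).
      rewrite pair_q [in RHS]big_ord_recr /= Ajj mulr0 addr0.
      by apply: eq_bigr => i _; rewrite /M /c !mxE.
    have c0 : c = 0 by rewrite -[c]mul1mx -NM -mulmxA Mc mulmx0.
    move=> i lti.
    by move: c0 => /matrixP/(_ (Ordinal lti) 0); rewrite !mxE.
  have := B3 j; rewrite pair_q big1 => [/eqP|i _]; first by rewrite eq_sym oner_eq0.
  case: (ltnP i j) => hi; first by rewrite Az ?mulr0.
  have -> : (i : nat) = j by apply/eqP; rewrite eqn_leq hi -ltnS ltn_ord.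
  by rewrite Ajj mulr0.
have nzC : forall j, (j < n)%N -> C' j j != 0.
  move=> j ltjn; have [Hw _] := IH j ltjn.
  apply/eqP => Cjj.
  have Cz : forall k, (k < j)%N -> C' j k = 0.
    case: j ltjn Hw Cjj => [|j'] // ltjn Hw Cjj.
    have [N [MN NM]] := Hgen j'.
    set M := lead_submx (Dmat pair v p) j'.
    set r := \row_(k < j'.+1) C' j'.+1 k.
    have rM : r *m M = 0.
      apply/matrixP => z i; rewrite !mxE.
      transitivity (pair (wvec v C' j'.+1) (p i)); last exact: Hw i (ltn_ord i).
      rewrite pair_w [in RHS]big_ord_recr /= Cjj mul0r addr0.
      by apply: eq_bigr => k _; rewrite /M /r !mxE.
    have r0 : r = 0 by rewrite -[r]mulmx1 -MN mulmxA rM mul0mx.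
    move=> k ltk.
    by move: r0 => /matrixP/(_ 0 (Ordinal ltk)); rewrite !mxE.
  have := B2 j; rewrite pair_w big1 => [/eqP|k _]; first by rewrite eq_sym oner_eq0.
  case: (ltnP k j) => hk; first by rewrite Cz ?mul0r.
  have -> : (k : nat) = j by apply/eqP; rewrite eqn_leq hk -ltnS ltn_ord.
  by rewrite Cjj mul0r.
split.
  elim/ltn_ind => i IHi ltin.
  have h : n <> i by move=> e; rewrite e ltnn in ltin.
  have := B1 n i h; rewrite pair_q big_ord_recr /= big1 ?add0r; last first.
    move=> j _; rewrite (IHi j (ltn_ord j)) ?mul0r //; exact: ltn_trans (ltn_ord j) ltin.
  move/(congr1 (fun x => x * (A' i i)^-1)); rewrite mul0r mulrK //; exact: Hsk (nzA i ltin).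
elim/ltn_ind => k IHk ltkn.
have h : k <> n by move=> e; rewrite e ltnn in ltkn.
have := B1 k n h; rewrite pair_w big_ord_recr /= big1 ?add0r; last first.
  move=> j _; rewrite (IHk j (ltn_ord j)) ?mulr0 //; exact: ltn_trans (ltn_ord j) ltkn.
move/(congr1 (fun x => (C' k k)^-1 * x)); rewrite mulr0 mulKr //; exact: Hsk (nzC k ltkn).
Qed.

Lemma charA A' C' : biorthogonal pair v p A' C' -> forall m (N : 'M_(m.+1)),
  N *m lead_submx (Dmat pair v p) m = 1%:M ->
  forall i, (i <= m)%N -> A' i m = N (inord i) (inord m).
Proof.
move=> hB m N NM i him.
set M := lead_submx (Dmat pair v p) m.
set c := \col_(j < m.+1) A' j m.
have Mc : M *m c = delta_mx (inord m) 0.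
  apply/matrixP => k z; rewrite (ord1 z) !mxE.
  transitivity (pair (v k) (qvec p A' m)).
    by rewrite pair_q; apply: eq_bigr => j _; rewrite /M /c /lead_submx !mxE.
  case: (hB) => _ _ B3.
  case: (eqVneq (k : nat) m) => [km|km].
    have -> : k == inord m by apply/eqP/val_inj; rewrite /= inordK // km.
    by rewrite km B3 eqxx.
  have [_ Hq] := @core A' C' hB m.
  have klt : (k < m)%N by rewrite ltn_neqAle km -ltnS ltn_ord.
  rewrite Hq //.
  have -> : (k == inord m) = false.
    by apply/negbTE; apply: contra_neq km => ->; rewrite inordK.
  by [].
have : c = N *m delta_mx (inord m) 0 by rewrite -Mc mulmxA NM mul1mx.
by rewrite -colE => /matrixP/(_ (inord i) 0); rewrite !mxE inordK.
Qed.

Lemma charC A' C' : biorthogonal pair v p A' C' -> forall m (N : 'M_(m.+1)),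
  lead_submx (Dmat pair v p) m *m N = 1%:M ->
  forall k, (k <= m)%N -> C' m k = N (inord m) (inord k).
Proof.
move=> hB m N MN k hkm.
set M := lead_submx (Dmat pair v p) m.
set r := \row_(j < m.+1) C' m j.
have rM : r *m M = delta_mx 0 (inord m).
  apply/matrixP => z i; rewrite (ord1 z) !mxE.
  transitivity (pair (wvec v C' m) (p i)).
    by rewrite pair_w; apply: eq_bigr => j _; rewrite /M /r /lead_submx !mxE.
  case: (hB) => _ B2 _.
  case: (eqVneq (i : nat) m) => [im|im].
    have -> : i == inord m by apply/eqP/val_inj; rewrite /= inordK // im.
    by rewrite im B2 eqxx.
  have [Hw _] := @core A' C' hB m.
  have ilt : (i < m)%N by rewrite ltn_neqAle im -ltnS ltn_ord.
  rewrite Hw //.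
  have -> : (i == inord m) = false.
    by apply/negbTE; apply: contra_neq im => ->; rewrite inordK.
  by [].
have : r = delta_mx 0 (inord m) *m N by rewrite -rM -mulmxA MN mulmx1.
by rewrite -rowE => /matrixP/(_ 0 (inord k)); rewrite !mxE inordK.
Qed.

Lemma main : exists A C : nat -> nat -> K,
    [/\ upper_tri A, lower_tri C, biorthogonal pair v p A C
      & forall A' C' : nat -> nat -> K,
          upper_tri A' -> lower_tri C' -> biorthogonal pair v p A' C' ->
          (forall i m, A' i m = A i m) /\ (forall m k, C' m k = C m k)].
Proof.
set D := Dmat pair v p.
have ex : forall m, exists N : 'M[K]_(m.+1),
    (lead_submx D m *m N == 1%:M) && (N *m lead_submx D m == 1%:M).
  by move=> m; have [N [h1 h2]] := Hgen m; exists N; rewrite h1 h2 !eqxx.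
pose N m := xchoose (ex m).
have HN m : lead_submx D m *m N m = 1%:M /\ N m *m lead_submx D m = 1%:M.
  by have /andP[/eqP h1 /eqP h2] := xchooseP (ex m).
pose A i m := if (i <= m)%N then N m (inord i) (inord m) else 0.
pose C m k := if (k <= m)%N then N m (inord m) (inord k) else 0.
have Ew m i : (i <= m)%N -> pair (wvec v C m) (p i) = (i == m)%:R.
  move=> him; rewrite pair_w.
  transitivity ((N m *m lead_submx D m) (inord m) (inord i)).
    rewrite mxE; apply: eq_bigr => k _; rewrite /C.
    have -> : (k <= m)%N by rewrite -ltnS.
    by rewrite /lead_submx mxE inord_val inordK.
  rewrite (proj2 (HN m)) mxE.
  have -> : (inord m == inord i :> 'I_m.+1) = (i == m).
    by rewrite eq_sym -val_eqE /= !inordK.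
  by [].
have Eq m k : (k <= m)%N -> pair (v k) (qvec p A m) = (k == m)%:R.
  move=> hkm; rewrite pair_q.
  transitivity ((lead_submx D m *m N m) (inord k) (inord m)).
    rewrite mxE; apply: eq_bigr => i _; rewrite /A.
    have -> : (i <= m)%N by rewrite -ltnS.
    by rewrite /lead_submx mxE inord_val inordK.
  rewrite (proj1 (HN m)) mxE.
  have -> : (inord k == inord m :> 'I_m.+1) = (k == m).
    by rewrite -val_eqE /= !inordK.
  by [].
exists A, C; split.
- by move=> i m lt; rewrite /A leqNgt lt.
- by move=> m k lt; rewrite /C leqNgt lt.
- split.
  + move=> m m' ne; case: (ltngtP m m') => [lt|lt|e]; last by [].
      rewrite pair_w big1 // => k _.
      have klt : (k < m')%N by apply: leq_trans (ltn_ord k) lt.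
      by rewrite Eq ?(ltnW klt) // ltn_eqF // mulr0.
    rewrite pair_q big1 // => i _.
    have ilt : (i < m)%N by apply: leq_trans (ltn_ord i) lt.
    by rewrite Ew ?(ltnW ilt) // ltn_eqF // mul0r.
  + by move=> m; rewrite Ew // eqxx.
  + by move=> m; rewrite Eq // eqxx.
- move=> A' C' uA' lC' hB; split => [i m|m k].
    rewrite /A; case: leqP => h; last exact: uA'.
    exact: (@charA A' C' hB m (N m) (proj2 (HN m)) i h).
  rewrite /C; case: leqP => h; last exact: lC'.
  exact: (@charC A' C' hB m (N m) (proj1 (HN m)) k h).
Qed.
End Helpers.

Theorem theorem1 (K : unitRingType) (V : lmodType K) (V' : lmodType K^c)
  (pair : V -> V' -> K) (v : nat -> V) (p : nat -> V') :
  skew_field K ->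
  is_pairing pair ->
  generic_mx (Dmat pair v p) ->
  exists A C : nat -> nat -> K,
    [/\ upper_tri A, lower_tri C, biorthogonal pair v p A C
      & forall A' C' : nat -> nat -> K,
          upper_tri A' -> lower_tri C' -> biorthogonal pair v p A' C' ->
          (forall i m, A' i m = A i m) /\ (forall m k, C' m k = C m k)].
Proof.
by move=> Hsk Hp Hgen; apply: main.
Qed.
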